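(* Let $K$ be a finite index subgroup of $F_2$. Then for any $h\in\Xi$ and any $z\in F_2$, \[ \lim_{n\to\infty} d_n^h(zK)=\frac{1}{[F_2:K]}. \]
   Context: $F_2$ is the free group on $a,b$ and $\Xi=\{a,b,a^{-1},b^{-1}\}$; $S_n$ is the set of elements of $F_2$ whose reduced word in $\Xi$ has length $n$. For $A\subseteq F_2$, $h\in\Xi$ and $n\geq1$, define $d_n^h(A)=\frac{1}{2}\left(\frac{|A\cap S_n|}{|S_n|}+\frac{|A\cap hS_n|}{|S_n|}\right)$, where $hS_n=\{hg:g\in S_n\}$. *)

(* Defs.v *)
From HB Require Import structures.
From mathcomp Require Import all_boot all_order all_algebra.
From mathcomp Require Import all_classical all_reals all_analysis.
Set Implicit Arguments. Unset Strict Implicit. Unset Printing Implicit Defensive.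
Import Order.TTheory GRing.Theory Num.Theory.

(* Letters Xi = {a, b, a^-1, b^-1} encoded as 'I_4 : 0 = a, 1 = b, 2 = a^-1, 3 = b^-1. *)
Definition letter := 'I_4.
Definition linv (x : letter) : letter := inord ((x + 2) %% 4).

Definition nonred (x y : letter) : bool := y != linv x.
Definition reduced (w : seq letter) : bool :=
  if w is x :: s then path nonred x s else true.

Definition push (x : letter) (s : seq letter) : seq letter :=
  if s is y :: s' then (if y == linv x then s' else x :: s) else [:: x].
Definition reduce (w : seq letter) : seq letter := foldr push [::] w.

Lemma reduce_reduced (w : seq letter) : reduced (reduce w).
Proof.
elim: w => [|x w IH] //=; rewrite /push.
case Hr: (reduce w) IH => [|y s] //= Hp.
case: ifP => Hy //=; first by case: s Hp {Hr} => //= z s /andP [].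
by rewrite /nonred Hy.
Qed.

Definition F2 := {w : seq letter | reduced w}.
Definition F2one : F2 := exist _ [::] isT.
Definition F2mul (u v : F2) : F2 :=
  exist _ (reduce (proj1_sig u ++ proj1_sig v)) (reduce_reduced _).
Definition F2inv (u : F2) : F2 :=
  exist _ (reduce (rev (map linv (proj1_sig u)))) (reduce_reduced _).
Definition F2gen (h : letter) : F2 := exist _ [:: h] isT.
Definition wlen (u : F2) : nat := size (proj1_sig u).

Definition sphere (n : nat) : seq F2 :=
  pmap (fun w : seq letter => match boolP (reduced w) with
                            | AltTrue p => Some (exist _ w p)
                            | AltFalse _ => None end)
       [seq val t | t : n.-tuple letter].

Definition hsphere (h : letter) (n : nat) : seq F2 :=
  undup (map (F2mul (F2gen h)) (sphere n)).

(* |A ∩ s| for a duplicate-free list s *)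
Definition cnt {R : realType} (A : set F2) (s : seq F2) : R :=
  \sum_(x <- s) (`[< A x >])%:R.

Definition dens {R : realType} (h : letter) (A : set F2) (n : nat) : R :=
  2^-1 * (cnt A (sphere n) / (size (sphere n))%:R
          + cnt A (hsphere h n) / (size (sphere n))%:R).

Definition subgroup (K : set F2) : Prop :=
  [/\ K F2one, (forall x y, K x -> K y -> K (F2mul x y))
    & (forall x, K x -> K (F2inv x))].

Definition lcoset (z : F2) (K : set F2) : set F2 := [set F2mul z k | k in K].

Definition has_index (K : set F2) (m : nat) : Prop :=
  exists r : 'I_m -> F2,
    (forall g, exists i, lcoset g K = lcoset (r i) K) /\
    injective (fun i => lcoset (r i) K).

(* Main.v *)
Require Import Defs.
From HB Require Import structures.
From mathcomp Require Import all_boot all_order all_algebra.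
From mathcomp Require Import all_classical all_reals all_analysis.
From mathcomp Require Import ring lra.
Import Order.TTheory GRing.Theory Num.Theory numFieldNormedType.Exports.
Local Open Scope ring_scope.
Local Open Scope classical_set_scope.

Lemma linv_val (x : letter) : nat_of_ord (linv x) = ((x + 2) %% 4)%N.
Proof. by rewrite /linv inordK // ltn_pmod. Qed.
Lemma linvK (x : letter) : linv (linv x) = x.
Proof. apply: val_inj => /=; rewrite !linv_val. by case: x => [[|[|[|[|k]]]] Hk]. Qed.

Lemma reduced_cons x s : reduced (x :: s) -> reduced s.
Proof. by case: s => //= y s /andP []. Qed.
Arguments reduced_cons {x s}.

Lemma push_reduced x s : reduced s -> reduced (push x s).
Proof.
case: s => [|y s] //= Hp; case: ifP => Hy //=; last by rewrite /nonred Hy.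
by case: s Hp => //= z s /andP [].
Qed.

Lemma push_cancel x s : reduced s -> push x (push (linv x) s) = s.
Proof.
case: s => [|y s] /=; first by rewrite eqxx.
rewrite linvK; case: eqP => [-> | Hy] Hp /=.
  case: s Hp => [|z s] //= /andP [Hn _]; move: Hn; rewrite /nonred => /negbTE ->.
  by [].
by rewrite eqxx.
Qed.

Lemma foldr_push_reduced t s : reduced t -> reduced (foldr push t s).
Proof. by move=> Ht; elim: s => //= x s IH; apply: push_reduced. Qed.

Lemma foldr_push_push x r t : reduced r -> reduced t ->
  foldr push t (push x r) = push x (foldr push t r).
Proof.
case: r => [|y r] //= Hr Ht; case: ifP => //= /eqP ->.
by rewrite push_cancel // foldr_push_reduced // (reduced_cons Hr).
Qed.

Lemma foldr_reduce t s : reduced t -> foldr push t (reduce s) = foldr push t s.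
Proof.
move=> Ht; elim: s => //= x s IH.
by rewrite foldr_push_push ?reduce_reduced // IH.
Qed.

Lemma reduce_cat u v : reduce (u ++ v) = foldr push (reduce v) u.
Proof. by rewrite /reduce foldr_cat. Qed.

Lemma reduce_id w : reduced w -> reduce w = w.
Proof.
elim: w => //= x w IH Hw; rewrite IH; last exact: reduced_cons Hw.
case: w Hw {IH} => //= y w /andP [Hn _]; move: Hn; rewrite /nonred => /negbTE ->.
by [].
Qed.

Lemma F2_eq (u v : F2) : proj1_sig u = proj1_sig v -> u = v.
Proof. by move=> H; apply: val_inj. Qed.

Lemma F2mulA u v w : F2mul (F2mul u v) w = F2mul u (F2mul v w).
Proof.
apply: F2_eq => /=.
case: u v w => [u pu] [v pv] [w pw] /=.
rewrite [LHS]reduce_cat foldr_reduce ?reduce_reduced // -reduce_cat -catA.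
rewrite [RHS]reduce_cat [reduce (reduce _)]reduce_id ?reduce_reduced //.
by rewrite reduce_cat.
Qed.

Lemma F2mul1 u : F2mul F2one u = u.
Proof. by apply: F2_eq => /=; rewrite reduce_id //; case: u. Qed.

Lemma F2mulr1 u : F2mul u F2one = u.
Proof. by apply: F2_eq => /=; rewrite cats0 reduce_id //; case: u. Qed.

Lemma foldr_push_inv t w : reduced t ->
  foldr push t (w ++ rev (map linv w)) = t.
Proof.
elim: w t => //= x w IH t Ht.
rewrite rev_cons -cats1 catA foldr_cat /= IH ?push_reduced //.
by rewrite push_cancel.
Qed.

Lemma F2mulV u : F2mul u (F2inv u) = F2one.
Proof.
apply: F2_eq => /=; rewrite reduce_cat reduce_id ?reduce_reduced //.
by rewrite -reduce_cat /reduce foldr_push_inv.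
Qed.

Lemma F2genK x : F2mul (F2gen (linv x)) (F2gen x) = F2one.
Proof. by apply: F2_eq => /=; rewrite linvK eqxx. Qed.

Lemma F2gen_cons x w (p : reduced (x :: w)) :
  exist _ (x :: w) p = F2mul (F2gen x) (exist _ w (reduced_cons p)).
apply: F2_eq => /=. by rewrite -[push x _]/(reduce (x :: w)) reduce_id.
Qed.

Set Implicit Arguments. Unset Strict Implicit.

Definition tz (R : realType) (a : nat -> R) :=
  forall e : R, 0 < e -> exists N, forall n, (N <= n)%N -> `|a n| <= e.
Arguments tz {R}.

Lemma tz_ext (R : realType) (a b : nat -> R) :
  (forall n, a n = b n) -> tz a -> tz b.
Proof. move=> H Ha e He; have [N HN] := Ha e He; exists N => n Hn; rewrite -H; exact: HN. Qed.

Lemma tz0 (R : realType) : tz (fun _ => 0 : R).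
Proof. by move=> e He; exists 0%N => n _; rewrite normr0 ltW. Qed.

Lemma tzD (R : realType) (a b : nat -> R) : tz a -> tz b -> tz (fun n => a n + b n).
Proof.
move=> Ha Hb e He.
have He2 : 0 < e / 2 by rewrite divr_gt0.
have [N1 H1] := Ha _ He2; have [N2 H2] := Hb _ He2.
exists (maxn N1 N2) => n Hn.
have h1 := H1 n (leq_trans (leq_maxl _ _) Hn).
have h2 := H2 n (leq_trans (leq_maxr _ _) Hn).
apply: le_trans (ler_normD _ _) _.
by rewrite [e](splitr e) lerD.
Qed.

Lemma tzZ (R : realType) (c : R) (a : nat -> R) : tz a -> tz (fun n => c * a n).
Proof.
move=> Ha e He.
have Hc : 0 < `|c| + 1 by rewrite ltr_wpDl.
have He' : 0 < e / (`|c| + 1) by rewrite divr_gt0.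
have [N HN] := Ha _ He'; exists N => n Hn.
have h := HN n Hn.
rewrite normrM.
apply: (le_trans (y := (`|c| + 1) * `|a n|)).
  by rewrite ler_wpM2r // lerDl.
by rewrite -ler_pdivlMl // mulrC.
Qed.

Lemma tzN (R : realType) (a : nat -> R) : tz a -> tz (fun n => - a n).
Proof. move=> Ha; apply: tz_ext (tzZ (-1) Ha) => n; by rewrite mulN1r. Qed.

Lemma tzB (R : realType) (a b : nat -> R) : tz a -> tz b -> tz (fun n => a n - b n).
Proof. by move=> Ha Hb; apply: tzD Ha (tzN Hb). Qed.

Lemma tz_sum (R : realType) (I : Type) (s : seq I) (P : pred I) (F : I -> nat -> R) :
  (forall i, P i -> tz (F i)) -> tz (fun n => \sum_(i <- s | P i) F i n).
Proof.
move=> HF; elim: s => [|i s IH].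
  by apply: tz_ext (@tz0 R) => n; rewrite big_nil.
case HP: (P i).
  by apply: tz_ext (tzD (HF i HP) IH) => n; rewrite big_cons HP.
by apply: tz_ext IH => n; rewrite big_cons HP.
Qed.

Lemma tz_sq (R : realType) (a b : nat -> R) :
  (forall n, a n ^+ 2 <= b n) -> tz b -> tz a.
Proof.
move=> Hab Hb e He.
have [N HN] := Hb _ (mulr_gt0 He He); exists N => n Hn.
have h1 := HN n Hn; have h2 := Hab n.
have h3 : b n <= e * e by apply: le_trans (ler_norm _) h1.
rewrite ler_norml; apply/andP; split; nra.
Qed.

Lemma tz_shift (R : realType) (a : nat -> R) : tz a -> tz (fun n => a n.+1).
Proof. move=> Ha e He; have [N HN] := Ha e He; exists N => n Hn; apply: HN; exact: leqW. Qed.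

Lemma tz_unshift (R : realType) (a : nat -> R) : tz (fun n => a n.+1) -> tz a.
Proof. move=> Ha e He; have [N HN] := Ha e He; exists N.+1 => -[|n] Hn //; exact: HN. Qed.

Lemma tz_cvg (R : realType) (a : nat -> R) (l : R) :
  tz (fun n => a n - l) -> a @ \oo --> l.
Proof.
move=> Ha; apply/cvgrPdist_le => e He.
have [N HN] := Ha e He; exists N => // n /= Hn.
by rewrite distrC; apply: HN.
Qed.

Lemma cvg_tz (R : realType) (a : nat -> R) (l : R) :
  a @ \oo --> l -> tz (fun n => a n - l).
Proof.
move=> /cvgrPdist_le Ha e He.
have [N _ HN] := Ha e He; exists N => n Hn.
by rewrite distrC; apply: HN.
Qed.

Lemma tz_noninc (R : realType) (E : nat -> R) :
  (forall n, 0 <= E n) -> (forall n, E n.+1 <= E n) -> tz (fun n => E n - E n.+1).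
Proof.
move=> H0 Hd.
have Hc : E @ \oo --> inf (range E).
  apply: nonincreasing_cvgn.
    by apply/nonincreasing_seqP => n.
  by exists 0 => _ [n _ <-].
have := cvg_tz Hc => Ht.
apply: tz_ext (tzB Ht (tz_shift Ht)) => n.
by rewrite opprB addrA subrK.
Qed.

Lemma sum_linv (R : realType) (F : letter -> R) :
  \sum_(x : letter) F (linv x) = \sum_(x : letter) F x.
Proof. by rewrite [RHS](reindex_inj (can_inj linvK)). Qed.

Lemma single_le (R : realType) (I : finType) (F : I -> R) i :
  (forall j, 0 <= F j) -> F i <= \sum_j F j.
Proof. by move=> H; rewrite (bigD1 i) //= lerDl sumr_ge0. Qed.
Arguments single_le {R I} F i.

Lemma sum_but (R : realType) (a : letter -> R) z :
  \sum_(y | y != z) a y = \sum_y a y - a z.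
Proof. by rewrite [X in _ = X - _](bigD1 z) //= addrC addrK. Qed.

Lemma quad_id (R : realType) (a : letter -> R) :
  \sum_z a z ^+ 2 - \sum_z (3^-1 * \sum_(y | y != z) a y) ^+ 2 =
  9^-1 * \sum_y \sum_y' (a y - a y') ^+ 2.
Proof.
have E z : \sum_(y | y != z) a y = \sum_y a y - a z by exact: sum_but.
rewrite [X in _ - X](eq_bigr (fun z => (3^-1 * (\sum_y a y - a z)) ^+ 2)); last by move=> z _; rewrite E.
rewrite !big_ord_recr !big_ord0 /=.
by field.
Qed.

Lemma single_le3 (R : realType) (I J : finType) (F : I -> J -> J -> R) j y y' :
  (forall a b c, 0 <= F a b c) -> F j y y' <= \sum_a \sum_b \sum_c F a b c.
Proof.
move=> H.
apply: (le_trans _ (single_le (fun a => \sum_b \sum_c F a b c) j _)); last first.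
  by move=> a; do 2!(apply: sumr_ge0 => ? _).
apply: (le_trans _ (single_le (fun b => \sum_c F j b c) y _)); last first.
  by move=> b; apply: sumr_ge0 => ? _.
exact: (single_le (fun c => F j y c) y').
Qed.

Arguments single_le3 {R I J} F j y y'.

Definition gg (R : realType) (m : nat) (u : nat -> 'I_m -> letter -> R) n j :=
  4^-1 * \sum_y u n j y.

Lemma mass_step (R : realType) (m : nat) (s : letter -> 'I_m -> 'I_m)
 (sK : forall x i, s (linv x) (s x i) = i)
 (u : nat -> 'I_m -> letter -> R)
 (uS : forall n i x, u n.+1 i x = 3^-1 * \sum_(y | y != linv x) u n (s (linv x) i) y) n :
 \sum_i \sum_x u n.+1 i x = \sum_i \sum_x u n i x.
Proof.
under eq_bigr do under eq_bigr do rewrite uS.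
rewrite exchange_big /=.
rewrite (eq_bigr (fun x => \sum_j 3^-1 * \sum_(y | y != linv x) u n j y)); last first.
  move=> x _; rewrite [RHS](reindex_inj (can_inj (sK (linv x)))) /=.
  by apply: eq_bigr => i _.
rewrite exchange_big /=; apply: eq_bigr => j _.
rewrite -mulr_sumr (sum_linv (fun z => \sum_(y | y != z) u n j y)).
rewrite (eq_bigr (fun x => \sum_y u n j y - u n j x)); last by move=> x _; exact: sum_but.
rewrite sumrB sumr_const card_ord.
set S := \sum_y u n j y.
by rewrite -mulr_natr; field.
Qed.

Lemma energy_step (R : realType) (m : nat) (s : letter -> 'I_m -> 'I_m)
 (sK : forall x i, s (linv x) (s x i) = i)
 (u : nat -> 'I_m -> letter -> R)
 (uS : forall n i x, u n.+1 i x = 3^-1 * \sum_(y | y != linv x) u n (s (linv x) i) y) n :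
 \sum_i \sum_x u n i x ^+ 2 - \sum_i \sum_x u n.+1 i x ^+ 2 =
 9^-1 * \sum_j \sum_y \sum_y' (u n j y - u n j y') ^+ 2.
Proof.
under [X in _ - X]eq_bigr do under eq_bigr do rewrite uS.
rewrite [X in _ - X]exchange_big /=.
rewrite [X in _ - X](eq_bigr (fun x => \sum_j (3^-1 * \sum_(y | y != linv x) u n j y) ^+ 2)); last first.
  move=> x _; rewrite [RHS](reindex_inj (can_inj (sK (linv x)))) /=.
  by apply: eq_bigr => i _.
rewrite [X in _ - X]exchange_big /= -sumrB mulr_sumr; apply: eq_bigr => j _.
rewrite (sum_linv (fun z => (3^-1 * \sum_(y | y != z) u n j y) ^+ 2)).
exact: quad_id.
Qed.

Lemma core (R : realType) (m : nat) (s : letter -> 'I_m -> 'I_m)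
 (sK : forall x i, s (linv x) (s x i) = i)
 (trans : forall i j, exists w : seq letter, foldr s i w = j)
 (u : nat -> 'I_m -> letter -> R)
 (uS : forall n i x, u n.+1 i x = 3^-1 * \sum_(y | y != linv x) u n (s (linv x) i) y)
 (mass0 : \sum_i \sum_x u 0%N i x = 4)
 (k : 'I_m) (h : letter) :
 tz (fun n => 2^-1 * (gg u n k + gg u n (s h k)) - (m%:R)^-1).
Proof.
pose E n := \sum_i \sum_x u n i x ^+ 2.
pose D n := \sum_j \sum_y \sum_y' (u n j y - u n j y') ^+ 2.
have D0 n : 0 <= D n by do 3!(apply: sumr_ge0 => ? _); exact: sqr_ge0.
have ED n : E n - E n.+1 = 9^-1 * D n by exact: energy_step.
have tzD' : tz D.
  have H1 : tz (fun n => E n - E n.+1).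
    apply: tz_noninc => n; first by do 2!(apply: sumr_ge0 => ? _); exact: sqr_ge0.
    by rewrite -subr_ge0 ED mulr_ge0.
  apply: tz_ext (tzZ 9 H1) => n; rewrite ED mulrA mulfV ?mul1r //.
have pair j y y' : tz (fun n => u n j y - u n j y').
  apply: tz_sq tzD' => n; rewrite /D.
  by apply: (single_le3 (fun a b c => (u n a b - u n a c) ^+ 2)) => *; exact: sqr_ge0.
have ug j y : tz (fun n => u n j y - gg u n j).
  have H : tz (fun n => 4^-1 * \sum_y' (u n j y - u n j y')).
    by apply: tzZ; apply: tz_sum => y' _; exact: pair.
  apply: tz_ext H => n; rewrite /gg sumrB sumr_const card_ord.
  by rewrite -mulr_natr; field.
have step i x : tz (fun n => u n.+1 i x - gg u n (s (linv x) i)).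
  set j := s (linv x) i.
  have H : tz (fun n => 3^-1 * \sum_(y | y != linv x) (u n j y - gg u n j)).
    by apply: tzZ; apply: tz_sum => y _; exact: ug.
  apply: tz_ext H => n; rewrite uS -/j.
  rewrite (sum_but (fun y => u n j y - gg u n j)) (sum_but (fun y => u n j y)).
  rewrite sumrB sumr_const card_ord /gg.
  by rewrite -mulr_natr; field.
have gstep i x : tz (fun n => gg u n.+1 i - gg u n (s (linv x) i)).
  apply: tz_ext (tzD (tzN (tz_shift (ug i x))) (step i x)) => n /=.
  by rewrite opprB addrA subrK.
pose Rel p q := tz (fun n => gg u n p - gg u n q).
have Rtr p q r : Rel p q -> Rel q r -> Rel p r.
  move=> H1 H2; apply: tz_ext (tzD H1 H2) => n /=; ring.
have Rsy p q : Rel p q -> Rel q p.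
  move=> H1; apply: tz_ext (tzN H1) => n /=; ring.
have gsym i a b : Rel (s a i) (s b i).
  have H1 := gstep i (linv b); have H2 := gstep i (linv a).
  rewrite linvK in H1; rewrite linvK in H2.
  apply: tz_ext (tzB H1 H2) => n /=; ring.
have pair2 j a b : Rel j (s a (s b j)).
  by have := gsym (s b j) (linv b) a; rewrite sK.
have even : forall k0 w j, size w = k0.*2 -> Rel j (foldr s j w).
  elim=> [|k0 IH] [|a [|b w]] j //=.
    by move=> _; apply: tz_ext (@tz0 R) => n; rewrite subrr.
  rewrite doubleS => -[] /= Hw.
  exact: Rtr (IH w j Hw) (pair2 _ a b).
have evenW w j : ~~ odd (size w) -> Rel j (foldr s j w).
  move=> Ho; apply: (even (size w)./2).
  by rewrite -{1}(odd_double_half (size w)) (negbTE Ho).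
pose t n i := gg u n i + gg u n (s h i).
have tvals i j : tz (fun n => t n i - t n j).
  have [w Hw] := trans i j.
  have E1 : foldr s (s h i) (w ++ [:: linv h]) = j by rewrite foldr_cat /= sK.
  case Ho: (odd (size w)).
    have H1 : Rel i (s h j).
      by rewrite -Hw; apply: (evenW (h :: w)); rewrite /= Ho.
    have H2 : Rel (s h i) j.
      by rewrite -E1; apply: evenW; rewrite size_cat /= addn1 /= Ho.
    apply: tz_ext (tzD H1 H2) => n; rewrite /t; ring.
  have H1 : Rel i j by rewrite -Hw; apply: evenW; rewrite Ho.
  have H2 : Rel (s h i) (s h j).
    have E2 : foldr s (s h i) (h :: w ++ [:: linv h]) = s h j by rewrite /= E1.
    by rewrite -E2; apply: evenW; rewrite /= size_cat /= addn1 /= Ho.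
  apply: tz_ext (tzD H1 H2) => n; rewrite /t; ring.
have mass n : \sum_i \sum_x u n i x = 4.
  by elim: n => [|n IH] //; rewrite (mass_step sK uS) IH.
have sumg n : \sum_i gg u n i = 1.
  by rewrite /gg -mulr_sumr mass mulVf.
have sumgs n : \sum_i gg u n (s h i) = 1.
  by rewrite -(sumg n) [RHS](reindex_inj (can_inj (sK h))).
have m0 : (m%:R : R) != 0 by rewrite pnatr_eq0 -lt0n (leq_ltn_trans _ (ltn_ord k)).
have H : tz (fun n => 2^-1 * m%:R^-1 * \sum_j (t n k - t n j)).
  by apply: tzZ; apply: tz_sum => j _; exact: tvals.
apply: tz_ext H => n.
rewrite sumrB sumr_const card_ord /t big_split /= sumg sumgs.
by rewrite -mulr_natr; field.
Qed.

Definition cidx (K : set F2) (m : nat) (r : 'I_m -> F2)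
  (Hcov : forall g, exists i, lcoset g K = lcoset (r i) K) (g : F2) : 'I_m :=
  projT1 (cid (Hcov g)).

Lemma cidxP K m r Hcov g : lcoset g K = lcoset (r (@cidx K m r Hcov g)) K.
Proof. exact: (projT2 (cid (Hcov g))). Qed.

Lemma cidx_eq K m r Hcov (Hinj : injective (fun i => lcoset (r i) K)) g g' :
  lcoset g K = lcoset g' K -> @cidx K m r Hcov g = cidx Hcov g'.
Proof. by move=> H; apply: Hinj => /=; rewrite -!cidxP. Qed.

Lemma cidx_r K m r Hcov (Hinj : injective (fun i => lcoset (r i) K)) i :
  @cidx K m r Hcov (r i) = i.
Proof. by apply: Hinj => /=; rewrite -cidxP. Qed.

Lemma lcoset_mul K x g : lcoset (F2mul x g) K = F2mul x @` lcoset g K.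
Proof.
apply/seteqP; split => y.
  by case=> k Hk <-; exists (F2mul g k); [exists k | rewrite F2mulA].
by case=> _ [k Hk <-] <-; exists k => //; rewrite F2mulA.
Qed.

Definition sig K m r Hcov (x : letter) (i : 'I_m) : 'I_m :=
  @cidx K m r Hcov (F2mul (F2gen x) (r i)).

Lemma cidx_mul K m r Hcov (Hinj : injective (fun i => lcoset (r i) K)) x g :
  @cidx K m r Hcov (F2mul (F2gen x) g) = sig Hcov x (cidx Hcov g).
Proof. by apply: cidx_eq => //; rewrite !lcoset_mul -cidxP. Qed.

Lemma sigK K m r Hcov (Hinj : injective (fun i => lcoset (r i) K)) x i :
  sig Hcov (linv x) (@sig K m r Hcov x i) = i.
Proof.
rewrite [sig Hcov x i]/sig -cidx_mul // -F2mulA F2genK F2mul1.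
exact: cidx_r.
Qed.

Lemma mem_lcoset K m r Hcov (Hinj : injective (fun i => lcoset (r i) K))
  (HK : subgroup K) z g :
  lcoset z K g <-> @cidx K m r Hcov g = cidx Hcov z.
Proof.
case: HK => K1 KM KV.
split.
  case=> k Hk <-; apply: cidx_eq => //.
  apply/seteqP; split => y.
    by case=> k' Hk' <-; exists (F2mul k k'); [exact: KM | rewrite F2mulA].
  case=> k'' Hk'' <-; exists (F2mul (F2inv k) k''); first by apply: KM => //; exact: KV.
  by rewrite F2mulA -(F2mulA k) F2mulV F2mul1.
move=> H.
have : lcoset g K = lcoset z K by rewrite (cidxP Hcov g) (cidxP Hcov z) H.
by move=> <-; exists F2one => //; rewrite F2mulr1.
Qed.

Lemma cidx_word K m r Hcov (Hinj : injective (fun i => lcoset (r i) K)) w (p : reduced w) :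
  @cidx K m r Hcov (exist _ w p) = foldr (sig Hcov) (cidx Hcov F2one) w.
Proof.
elim: w p => [|x w IH] p.
  by congr cidx; apply: F2_eq.
by rewrite F2gen_cons cidx_mul // IH.
Qed.

Lemma foldr_sig_inv K m r Hcov (Hinj : injective (fun i => lcoset (r i) K)) o w :
  foldr (@sig K m r Hcov) (foldr (sig Hcov) o w) (rev (map linv w)) = o.
Proof.
elim: w => //= x w IH.
by rewrite rev_cons -cats1 foldr_cat /= sigK.
Qed.

Lemma sig_trans K m r Hcov (Hinj : injective (fun i => lcoset (r i) K)) i j :
  exists w, foldr (@sig K m r Hcov) i w = j.
Proof.
pose o := cidx Hcov F2one.
case Hi : (r i) => [wi pi]; case Hj : (r j) => [wj pj].
exists (wj ++ rev (map linv wi)).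
have Ei : i = foldr (sig Hcov) o wi by rewrite -(cidx_r Hcov Hinj i) Hi cidx_word.
have Ej : j = foldr (sig Hcov) o wj by rewrite -(cidx_r Hcov Hinj j) Hj cidx_word.
by rewrite foldr_cat {1}Ei foldr_sig_inv // Ej.
Qed.

Lemma sum_tupleS (R : realType) (F : seq letter -> R) n :
  \sum_(t : n.+1.-tuple letter) F t = \sum_(x : letter) \sum_(t : n.-tuple letter) F (x :: t).
Proof.
rewrite pair_big /=.
rewrite (reindex (fun p : letter * n.-tuple letter => [tuple of p.1 :: p.2])) /=.
  by apply: eq_bigr => -[x t] _.
exists (fun t : n.+1.-tuple letter => (thead t, [tuple of behead t])).
  by move=> [x t] _ /=; congr pair; apply: val_inj.
move=> t _; apply: val_inj => /=.
by case: t => -[|a l] //.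
Qed.

Lemma sum_tuple0 (R : realType) (F : seq letter -> R) :
  \sum_(t : 0.-tuple letter) F t = F [::].
Proof.
by rewrite (big_pred1 [tuple]) // => t; apply/esym/eqP/tuple0.
Qed.

Lemma oapp_sph (R : realType) (G : F2 -> R) (Gw : seq letter -> R)
  (HG : forall w p, G (exist _ w p) = Gw w) (w : seq letter) :
  oapp G 0 (match boolP (reduced w) with
            | AltTrue p => Some (exist (fun w => reduced w) w p)
            | AltFalse _ => None end) = if reduced w then Gw w else 0.
Proof. by case: {-}_ / boolP => p /=; [rewrite HG p | rewrite (negbTE p)]. Qed.

Lemma sphere_sum (R : realType) (G : F2 -> R) (Gw : seq letter -> R) n :
  (forall w p, G (exist _ w p) = Gw w) ->
  \sum_(g <- sphere n) G g = \sum_(t : n.-tuple letter) (if reduced t then Gw t else 0).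
Proof.
move=> HG; rewrite /sphere big_pmap big_image /=.
apply: eq_bigr => t _.
exact: oapp_sph.
Qed.

Lemma sphere_uniq n : uniq (sphere n).
Proof.
apply: (@pmap_uniq _ _ _ (fun u : F2 => proj1_sig u)).
  by move=> w /=; case: {-}_ / boolP.
rewrite /image_mem map_inj_uniq ?enum_uniq //; exact: val_inj.
Qed.

Lemma F2gen_inj h : injective (F2mul (F2gen h)).
Proof.
move=> a b H; have := congr1 (F2mul (F2gen (linv h))) H.
by rewrite -!F2mulA F2genK !F2mul1.
Qed.

Unset Implicit Arguments.

Theorem corollary5p8 (R : realType) (K : set F2) (m : nat) :
  subgroup K -> has_index K m ->
  forall (h : letter) (z : F2),
    (fun n : nat => dens (R := R) h (lcoset z K) n) @ \oo --> ((m%:R)^-1 : R).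
Proof.
move=> HK [r [Hcov Hinj]] h z.
pose s := sig Hcov.
have sK : forall x i, s (linv x) (s x i) = i by move=> x i; exact: sigK.
have sK' : forall x i, s x (s (linv x) i) = i.
  by move=> x i; have := sK (linv x) i; rewrite linvK.
pose o := cidx Hcov F2one.
pose k := cidx Hcov z.
pose C n i x : R := \sum_(t : n.-tuple letter)
   (if reduced (x :: t) then ((foldr s o (x :: t) == i)%:R : R) else 0).
pose u n i x := C n i x / 3 ^+ n.
have eqs x a i : (s x a == i) = (a == s (linv x) i).
  by apply/eqP/eqP => [<-|->]; [rewrite sK | rewrite sK'].
have CS n i x : C n.+1 i x = \sum_(y | y != linv x) C n (s (linv x) i) y.
  rewrite /C (sum_tupleS (fun w => if reduced (x :: w) then ((foldr s o (x :: w) == i)%:R : R) else 0)).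
  rewrite [RHS]big_mkcond /=; apply: eq_bigr => y _.
  case Hy: (y != linv x).
    by apply: eq_bigr => t _ /=; rewrite /nonred Hy /= eqs.
  by rewrite big1 // => t _ /=; rewrite /nonred Hy.
have e3 n : (3 ^+ n : R) != 0 by rewrite expf_neq0 // pnatr_eq0.
have uS n i x : u n.+1 i x = 3^-1 * \sum_(y | y != linv x) u n (s (linv x) i) y.
  rewrite /u CS -mulr_suml exprS.
  by field.
have mass0 : \sum_i \sum_x u 0%N i x = 4.
  rewrite exchange_big /=.
  rewrite (eq_bigr (fun _ => 1)); first by rewrite sumr_const card_ord.
  move=> x0 _; rewrite /u /C.
  under eq_bigr => i _ do rewrite expr0 divr1 (sum_tuple0 (fun w => if reduced (x0 :: w) then ((foldr s o (x0 :: w) == i)%:R : R) else 0)) /=.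
  rewrite (bigD1 (s x0 o)) //= eqxx big1 ?addr0 // => j /negbTE.
  by rewrite eq_sym => ->.
have mass n : \sum_i \sum_x u n i x = 4.
  by elim: n => [|n IH] //; rewrite (mass_step sK uS) IH.
have Hcore := core sK (sig_trans Hcov Hinj) uS mass0 k (linv h).
apply: tz_cvg; apply: tz_unshift; apply: tz_ext Hcore => n.
congr (_ - _).
have memE g : `[< lcoset z K g >] = (cidx Hcov g == k).
  have E := mem_lcoset Hcov Hinj HK z g.
  case: asboolP => H; apply/esym.
    by apply/eqP; apply/E.
  by apply/negbTE/eqP => /E.
have cnt1 j : \sum_(g <- sphere n.+1) ((cidx Hcov g == j)%:R : R) = \sum_x C n j x.
  rewrite (@sphere_sum R _ (fun w => ((foldr s o w == j)%:R : R))); last first.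
    by move=> w p; rewrite cidx_word.
  by rewrite (sum_tupleS (fun w => if reduced w then ((foldr s o w == j)%:R : R) else 0)).
have A1 : \sum_(g <- sphere n.+1) (`[< lcoset z K g >]%:R : R) = \sum_x C n k x.
  by rewrite -cnt1; apply: eq_bigr => g _; rewrite memE.
have A2 : \sum_(g <- hsphere h n.+1) (`[< lcoset z K g >]%:R : R) = \sum_x C n (s (linv h) k) x.
  rewrite /hsphere undup_id ?(map_inj_uniq (@F2gen_inj h)) ?sphere_uniq // big_map -cnt1.
  by apply: eq_bigr => g _; rewrite memE cidx_mul // eqs.
have A3 : ((size (sphere n.+1))%:R : R) = \sum_j \sum_x C n j x.
  rewrite -sum1_size natr_sum.
  rewrite (eq_bigr (fun g => \sum_j ((cidx Hcov g == j)%:R : R))); last first.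
    move=> g _; rewrite (bigD1 (cidx Hcov g)) //= eqxx big1 ?addr0 // => j /negbTE.
    by rewrite eq_sym => ->.
  rewrite exchange_big /=; apply: eq_bigr => j _; exact: cnt1.
have Cu j x : C n j x = u n j x * 3 ^+ n by rewrite /u divfK.
rewrite /dens /cnt A1 A2 A3.
have SC j : \sum_x C n j x = (\sum_x u n j x) * 3 ^+ n.
  by rewrite mulr_suml; apply: eq_bigr => x _; exact: Cu.
have Tot : \sum_j \sum_x C n j x = 4 * 3 ^+ n.
  by rewrite (eq_bigr _ (fun j _ => SC j)) -mulr_suml mass.
rewrite Tot (SC k) (SC (s (linv h) k)) /gg.
by field.
Qed.
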